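(* Let $X$ and $Y$ be Hausdorff compact spaces and $\pi: X \to Y$ a fully closed continuous surjection. For each $y \in Y$ fix a point $0_y \in \pi^{-1}(y)$ and let $H^0_y = \{g \in C(\pi^{-1}(y)) : g(0_y) = 0\}$ with the supremum norm. Let $H = \bigoplus_{c_0(Y)} H^0_y$ be the $c_0$-sum, i.e. the space of families $h = (h_y)_{y\in Y}$ with $h_y \in H^0_y$ such that for every $\varepsilon>0$ the set $\{y : \|h_y\| > \varepsilon\}$ is finite, normed by $\|h\| = \sup_y \|h_y\|$. For $f \in C(X)$ put $f_y = \left(f - f(0_y)\right)|_{\pi^{-1}(y)} \in H^0_y$ and $T f = (f_y)_{y \in Y}$. Then for every $h \in H$ there exists $f \in C(X)$ with $Tf = h$; that is, $T$ maps $C(X)$ onto $H$.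
   Context: A continuous surjection $\pi: X \to Y$ between Hausdorff compacta is fully closed if for any two closed disjoint subsets $F_1, F_2 \subset X$ the set $\pi(F_1)\cap\pi(F_2)$ is finite. $C(K)$ denotes the Banach space of real continuous functions on $K$ with the sup norm. *)

(* Defs.v *)
From HB Require Import structures.
From mathcomp Require Import all_boot all_order all_algebra.
From mathcomp Require Import all_classical all_reals all_analysis.
Set Implicit Arguments. Unset Strict Implicit. Unset Printing Implicit Defensive.
Import Order.TTheory GRing.Theory Num.Theory.
Import numFieldNormedType.Exports.
Local Open Scope classical_set_scope.
Local Open Scope ring_scope.

(* A continuous surjection pi : X -> Y is fully closed if for any two closed
   disjoint subsets F1, F2 of X the set pi(F1) /\ pi(F2) is finite.
   (Continuity and surjectivity are stated separately in the theorem.) *)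
Definition fully_closed (X Y : topologicalType) (pi : X -> Y) : Prop :=
  forall F1 F2 : set X, closed F1 -> closed F2 -> F1 `&` F2 = set0 ->
    finite_set (pi @` F1 `&` pi @` F2).

Definition fibre (X Y : Type) (pi : X -> Y) (y : Y) : set X := pi @^-1` [set y].

(* Each h_y is represented by a function X -> R of which only its restriction
   to the fibre pi^{-1}(y) matters. The condition ||h_y|| > eps (sup norm over
   the fibre) is written out as "some point of the fibre has |h_y x| > eps". *)
Definition in_c0_sum (X Y : topologicalType) (R : realType) (pi : X -> Y)
    (zero : Y -> X) (h : Y -> X -> R) : Prop :=
  (forall y, {within fibre pi y, continuous (h y)}) /\
  (forall y, h y (zero y) = 0) /\
  (forall eps : R, 0 < eps ->
     finite_set [set y | exists2 x, fibre pi y x & eps < `|h y x|]).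

(* T f = (f_y)_y with f_y = (f - f(0_y)) restricted to the fibre; T f = h means
   equality of each component as functions on the fibre. *)
Definition T_eq (X Y : Type) (R : realType) (pi : X -> Y) (zero : Y -> X)
    (f : X -> R) (h : Y -> X -> R) : Prop :=
  forall y x, fibre pi y x -> f x - f (zero y) = h y x.

(* Main.v *)
Require Import Defs.
From HB Require Import structures.
From mathcomp Require Import all_boot all_order all_algebra.
From mathcomp Require Import all_classical all_reals all_analysis.
From mathcomp Require Import ring lra.
From mathcomp Require Import finmap.
Import Order.TTheory GRing.Theory Num.Theory.
Import numFieldNormedType.Exports.
Local Open Scope classical_set_scope.
Local Open Scope ring_scope.

Section Main.
Variables (R : realType) (X Y : topologicalType).
Hypotheses (hX : hausdorff_space X) (cX : compact [set: X])
  (hY : hausdorff_space Y) (cY : compact [set: Y]).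
Variable pi : X -> Y.
Hypothesis pi_cont : continuous pi.
Hypothesis pi_fc : fully_closed pi.

Lemma fibreE y x : fibre pi y x = (pi x = y). Proof. by []. Qed.

Lemma closed_finite (T : topologicalType) (S : set T) :
  hausdorff_space T -> finite_set S -> closed S.
Proof.
move=> hT fS.
have -> : S = \bigcup_(y in S) [set y].
  by apply/seteqP; split=> [x Sx|x [y Sy ->]] //; exists x.
apply: closed_bigcup => // y _; by apply: accessible_closed_set1; exact: hausdorff_accessible.
Qed.

Lemma fibre_closed y : closed (fibre pi y).
Proof.
apply: (continuous_closedP _).1 => //.
by apply: accessible_closed_set1; exact: hausdorff_accessible.
Qed.

Lemma cont_bounded (v : X -> R) : continuous v -> exists N : R, 0 <= N /\ forall x, `|v x| <= N.
Proof.
move=> cv.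
have : compact (v @` setT).
  by apply: continuous_compact => //; exact: continuous_subspaceT.
move=> /compact_bounded [M0 [_ HM]].
exists (`|M0| + 1); split; first by rewrite addr_ge0.
move=> x; apply: (HM (`|M0| + 1)); last by exists x.
by rewrite (le_lt_trans (ler_norm M0))// ltrDl.
Qed.


Lemma osc_fin (v : X -> R) : continuous v -> forall d : R, 0 < d ->
  finite_set [set y | exists x x', [/\ pi x = y, pi x' = y & d < `|v x - v x'|]].
Proof.
move=> cv d d0; have [N [N0 HN]] := cont_bounded _ cv.
pose e := d / 3.
have e0 : 0 < e by rewrite divr_gt0.
have de : d = 3 * e by rewrite /e; field.
pose c (k : nat) := - N + k%:R * e.
pose A k := [set x | v x <= c k].
pose B k := [set x | c k + e <= v x].
pose K := (Num.Def.trunc (2 * N / e)).+2.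
have key : forall x x', pi x = pi x' -> v x + d < v x' ->
    (\bigcup_(k in `I_K) (pi @` A k `&` pi @` B k)) (pi x).
  move=> x x' pxx hxx'.
  pose t := (v x + N) / e.
  have hvx := HN x; have hvx' := HN x'.
  move: hvx hvx'; rewrite !ler_norml => /andP[h1 h2] /andP[h3 h4].
  have t0 : 0 <= t by rewrite /t divr_ge0 // ?(ltW e0) //; lra.
  pose k := (Num.Def.trunc t).+1.
  have hk1 : t < k%:R by exact: truncnS_gt.
  have hk2 : k%:R <= t + 1 by rewrite /k -addn1 natrD lerD2r truncn_le.
  have tE : t * e = v x + N by rewrite /t; field; lra.
  have kK : (k < K)%N.
    rewrite /k /K ltnS ltnS; apply: le_truncn.
    rewrite /t ler_pM2r ?invr_gt0 //; lra.
  have Ak : A k x.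
    rewrite /A /c /=.
    have : t * e < k%:R * e by rewrite ltr_pM2r.
    lra.
  have Bk : B k x'.
    rewrite /B /c /=.
    have : k%:R * e <= (t + 1) * e by rewrite ler_pM2r.
    lra.
  by exists k => //; split; [exists x| exists x'].
apply: (@sub_finite_set _ _ (\bigcup_(k in `I_K) (pi @` A k `&` pi @` B k))).
  move=> y [x [x' [px px' hd]]].
  move: hd; rewrite ltr_normr => /orP[hd|hd].
    by rewrite -px'; apply: (key x' x); [rewrite px px'|lra].
  by rewrite -px; apply: (key x x'); [rewrite px px'|lra].
apply: bigcup_finite; first exact: finite_II.
move=> k _; apply: pi_fc.
- have := ((continuous_closedP v).1 cv _ (@closed_le R (c k))). exact.
- have := ((continuous_closedP v).1 cv _ (@closed_ge R (c k + e))). exact.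
- apply/seteqP; split => x // [h1 h2]; rewrite /A /B /= in h1 h2; lra.
Qed.


Variable zero : Y -> X.
Hypothesis zero_fibre : forall y, pi (zero y) = y.
Variable h : Y -> X -> R.
Hypothesis hH : in_c0_sum pi zero h.

Definition err (f : X -> R) y x := h y x - (f x - f (zero y)).

Lemma err_fin f : continuous f -> forall eps : R, 0 < eps ->
  finite_set [set y | exists2 x, pi x = y & eps < `|err f y x|].
Proof.
move=> cf eps eps0; case: hH => [hc [h0 hfin]].
have e2 : 0 < eps / 2 by rewrite divr_gt0.
apply: (@sub_finite_set _ _ ([set y | exists2 x, fibre pi y x & eps / 2 < `|h y x|] `|`
   [set y | exists x x', [/\ pi x = y, pi x' = y & eps / 2 < `|f x - f x'|]])).
  move=> y [x px hx].
  have [H|H] := ltP (eps / 2) `|h y x|; first by left; exists x.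
  right; exists x, (zero y); split => //.
  have := ler_normB (h y x) (f x - f (zero y)).
  move: hx; rewrite /err => hx.
  have [//|H2] := ltP (eps / 2) `|f x - f (zero y)|; lra.
rewrite finite_setU; split; first exact: hfin.
exact: osc_fin.
Qed.


Lemma step f : continuous f -> forall M : R, 0 < M ->
  (forall y x, pi x = y -> `|err f y x| <= M) ->
  exists d : X -> R, [/\ continuous d, (forall x, `|d x| <= M / 3) &
     (forall y x, pi x = y -> `|err (f \+ d) y x| <= M * (2 / 3))].
Proof.
move=> cf M M0 bd; case: hH => [hc [h0 hfin]].
have nX := compact_normal hX cX; have nY := compact_normal hY cY.
pose P := [set y | exists2 x, pi x = y & M / 4 < `|err f y x|].
have fP : finite_set P by apply: err_fin => //; rewrite divr_gt0.
have ec : forall y, {within fibre pi y, continuous (err f y)}.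
  move=> y x; rewrite /err; apply: cvgB; first exact: hc.
  apply: cvgB; first exact: continuous_subspaceT.
  exact: cvg_cst.
have e0 : forall y, err f y (zero y) = 0 by move=> y; rewrite /err h0 subrr subr0.
have clpiece : forall y (S : set R), closed S -> closed (fibre pi y `&` (err f y) @^-1` S).
  move=> y S cS; rewrite closed_setSI; last exact: fibre_closed.
  by apply: preimage_closed => // x _; exact: ec.
pose A0 := \bigcup_(y in P) (fibre pi y `&` err f y @^-1` [set r | r <= -(M/3)]).
pose B0 := \bigcup_(y in P) (fibre pi y `&` err f y @^-1` [set r | M/3 <= r]).
pose Z := \bigcup_(y in P) [set zero y].
have cA0 : closed A0 by apply: closed_bigcup => // y _; apply: clpiece; exact: closed_le.
have cB0 : closed B0 by apply: closed_bigcup => // y _; apply: clpiece; exact: closed_ge.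
have cZ : closed Z.
  apply: closed_bigcup => // y _.
  by apply: accessible_closed_set1; exact: hausdorff_accessible.
have M3 : 0 < M / 3 by rewrite divr_gt0.
have dA : (A0 `|` Z) `&` B0 = set0.
  apply/seteqP; split => x // [AZx [y' Py' [px' hx']]]; rewrite fibreE in px'.
  case: AZx => [[y Py [px hx]]|[y Py xz]].
    rewrite fibreE in px; move: px'; rewrite px => yy; subst y'; rewrite /preimage /= in hx hx'; lra.
  rewrite /= in xz; subst x; move: px'; rewrite zero_fibre => yy; subst y'.
  rewrite /preimage /= e0 in hx'; lra.
have dB : (B0 `|` Z) `&` A0 = set0.
  apply/seteqP; split => x // [AZx [y' Py' [px' hx']]]; rewrite fibreE in px'.
  case: AZx => [[y Py [px hx]]|[y Py xz]].
    rewrite fibreE in px; move: px'; rewrite px => yy; subst y'; rewrite /preimage /= in hx hx'; lra.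
  rewrite /= in xz; subst x; move: px'; rewrite zero_fibre => yy; subst y'.
  rewrite /preimage /= e0 in hx'; lra.
have [u1 [cu1 u1A u1B u1r]] := urysohn_ext_itv nX (closedU cA0 cZ) cB0 dA M3.
have [u2 [cu2 u2A u2B u2r]] := urysohn_ext_itv nX (closedU cB0 cZ) cA0 dB M3.
pose u x := u1 x - u2 x.
have cu : continuous u by move=> x; apply: cvgB; [exact: cu1| exact: cu2].
have r1 x : 0 <= u1 x <= M / 3.
  have : range u1 (u1 x) by exists x.
  by move/u1r; rewrite /= in_itv.
have r2 x : 0 <= u2 x <= M / 3.
  have : range u2 (u2 x) by exists x.
  by move/u2r; rewrite /= in_itv.
have uA x : A0 x -> u x = - (M / 3).
  move=> Ax; rewrite /u.
  have -> : u1 x = 0 by apply: u1A; exists x => //; left.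
  have -> : u2 x = M / 3 by apply: u2B; exists x.
  by rewrite sub0r.
have uB x : B0 x -> u x = M / 3.
  move=> Bx; rewrite /u.
  have -> : u1 x = M / 3 by apply: u1B; exists x.
  have -> : u2 x = 0 by apply: u2A; exists x => //; left.
  by rewrite subr0.
have uZ x : Z x -> u x = 0.
  move=> Zx; rewrite /u.
  have -> : u1 x = 0 by apply: u1A; exists x => //; right.
  have -> : u2 x = 0 by apply: u2A; exists x => //; right.
  by rewrite subr0.
have ub x : `|u x| <= M / 3.
  by have := r1 x; have := r2 x; rewrite /u ler_norml => /andP[? ?] /andP[? ?]; apply/andP; split; lra.
pose Q := [set y | exists x x', [/\ pi x = y, pi x' = y & M / 4 < `|u x - u x'|]].
have fQ : finite_set Q by apply: osc_fin => //; rewrite divr_gt0.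
have dQP : (Q `\` P) `&` P = set0.
  by apply/seteqP; split => y // [[_ nP] Py].
have [a [ca aQ aP ar]] := urysohn_ext_itv nY (closed_finite _ _ hY (finite_setD P fQ))
  (closed_finite _ _ hY fP) dQP (@ltr01 R).
have ra y : 0 <= a y <= 1.
  have : range a (a y) by exists y.
  by move/ar; rewrite /= in_itv.
pose d := (a \o pi) \* u.
exists d; split.
- move=> x; apply: continuousM; last exact: cu.
  apply: continuous_comp; [exact: pi_cont| exact: ca].
- move=> x; rewrite /d /= normrM.
  have := ra (pi x); have := ub x; have := normr_ge0 (u x).
  rewrite (@ger0_norm _ (a (pi x))); last by case/andP: (ra (pi x)).
  move=> n0 hu /andP[ha0 ha1].
  have : a (pi x) * `|u x| <= 1 * `|u x| by rewrite ler_wpM2r.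
  lra.
move=> y x px.
have -> : err (f \+ d) y x = err f y x - (d x - d (zero y)).
  by rewrite /err /=; ring.
have := bd y x px; rewrite ler_norml => /andP[eM1 eM2].
have [Py|nPy] := pselect (P y).
  have ay : a y = 1 by apply: aP; exists y.
  have -> : d x - d (zero y) = u x.
    have uz : u (zero y) = 0 by apply: uZ; exists y.
    by rewrite /d /= px zero_fibre ay uz !mul1r subr0.
  have := ub x; rewrite ler_norml => /andP[ux1 ux2].
  rewrite ler_norml; apply/andP; split.
  - have [H|H] := leP (err f y x) (- (M / 3)).
      by rewrite uA; [lra| exists y => //; split].
    lra.
  - have [H|H] := leP (M / 3) (err f y x).
      by rewrite uB; [lra| exists y => //; split].
    lra.
have ey : `|err f y x| <= M / 4.
  by have [//|H] := leP `|err f y x| (M / 4); exfalso; apply: nPy; exists x.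
have [Qy|nQy] := pselect (Q y).
  have ay : a y = 0 by apply: aQ; exists y.
  have -> : d x - d (zero y) = 0.
    by rewrite /d /= px zero_fibre ay !mul0r subrr.
  by rewrite subr0; lra.
have uxz : `|u x - u (zero y)| <= M / 4.
  have [//|H] := leP `|u x - u (zero y)| (M / 4); exfalso; apply: nQy.
  by exists x, (zero y); split => //; rewrite zero_fibre.
have -> : d x - d (zero y) = a y * (u x - u (zero y)).
  by rewrite /d /= px zero_fibre; ring.
have := ler_normB (err f y x) (a y * (u x - u (zero y))).
rewrite normrM (@ger0_norm _ (a y)); last by case/andP: (ra y).
have := ra y; move=> /andP[ha0 ha1].
have : a y * `|u x - u (zero y)| <= 1 * `|u x - u (zero y)| by rewrite ler_wpM2r.
lra.
Qed.


Lemma seq_bound (N : Y -> R) (s : seq Y) :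
  exists M, 0 <= M /\ forall y, y \in s -> N y <= M.
Proof.
elim: s => [|a s [M [M0 HM]]]; first by exists 0; split.
exists (M + `|N a|); split; first by rewrite addr_ge0.
move=> y; rewrite inE => /orP[/eqP ->|ys].
  have := ler_norm (N a); lra.
have := HM y ys; have := normr_ge0 (N a); lra.
Qed.

Lemma h_bound : exists M0 : R, 0 < M0 /\ forall y x, pi x = y -> `|h y x| <= M0.
Proof.
case: hH => [hc [h0 hfin]].
have Nex : forall y, exists N : R, forall x, pi x = y -> `|h y x| <= N.
  move=> y.
  have cF : compact (fibre pi y).
    by apply: (subclosed_compact (fibre_closed y) cX).
  have /compact_bounded [M1 [_ HM]] : compact (h y @` fibre pi y).
    exact: continuous_compact.
  exists (`|M1| + 1) => x px; apply: (HM (`|M1| + 1)); last by exists x.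
  by rewrite (le_lt_trans (ler_norm M1))// ltrDl.
have [N HN] := choice Nex.
have /finite_fsetP [B SB] := hfin 1 ltr01.
have [M [M0 HM]] := seq_bound N (finmap.enum_fset B).
exists (M + 1); split; first by lra.
move=> y x px.
have [H|H] := ltP 1 `|h y x|; last by lra.
have yB : y \in finmap.enum_fset B.
  have : [set` B] y by rewrite -SB; exists x.
  exact.
have := HM y yB; have := HN y x px; lra.
Qed.


Lemma main_exists : exists f : X -> R, continuous f /\ T_eq pi zero f h.
Proof.
have [M0 [M00 hM0]] := h_bound.
pose q : R := 2 / 3.
have q0 : 0 <= q by rewrite /q divr_ge0.
have qn0 n : 0 <= q ^+ n by rewrite exprn_ge0.
pose Inv n (f : X -> R) := continuous f /\
  (forall y x, pi x = y -> `|err f y x| <= M0 * q ^+ n).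
have Dex : forall p : nat * (X -> R), exists d : X -> R, Inv p.1 p.2 ->
    [/\ continuous d, (forall x, `|d x| <= M0 * q ^+ p.1 / 3) & Inv p.1.+1 (p.2 \+ d)].
  case=> n f /=; have [[cf bf]|nH] := pselect (Inv n f); last by exists (fun=> 0).
  have Mn : 0 < M0 * q ^+ n by rewrite mulr_gt0 // exprn_gt0 // /q divr_gt0.
  have [d [cd bd ed]] := step _ cf _ Mn bf.
  exists d => _; split => //; split.
    by move=> x; apply: continuousD; [exact: cf|exact: cd].
  by move=> y x px; rewrite exprSr /q mulrA; exact: ed.
have [D HD] := choice Dex.
pose fs := fix F n := if n is m.+1 then F m \+ D (m, F m) else (fun=> 0 : R).
have fsS n : fs n.+1 = fs n \+ D (n, fs n) by [].
have inv : forall n, Inv n (fs n) /\ (forall x, `|fs n.+1 x - fs n x| <= M0 * q ^+ n / 3).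
  elim=> [|n [IH _]].
    have I0 : Inv 0 (fs 0).
      split; first by move=> x; exact: cvg_cst.
      by move=> y x px; rewrite /err /= subrr subr0 expr0 mulr1; exact: hM0.
    split => // x; have [_ bd _] := HD (0%N, fs 0) I0.
    by rewrite fsS /= addrC addKr; exact: bd.
  have [_ _ I1] := HD (n, fs n) IH.
  split => // x; have [_ bd _] := HD (n.+1, fs n.+1) I1.
  by rewrite (fsS n.+1) /= addrC addKr; exact: bd.
have cauchy : forall n k x, `|fs (n + k)%N x - fs n x| <= M0 * (q ^+ n - q ^+ (n + k)).
  move=> n k x; elim: k => [|k IH]; first by rewrite addn0 !subrr normr0 mulr0.
  have := (inv (n + k)%N).2 x; rewrite addnS exprS.
  have := ler_normD (fs (n + k).+1 x - fs (n + k)%N x) (fs (n + k)%N x - fs n x).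
  rewrite [in X in X -> _](_ : fs (n + k).+1 x - fs (n + k)%N x + (fs (n + k)%N x - fs n x) = fs (n + k).+1 x - fs n x); last by ring.
  rewrite /q; lra.
have lb : forall n m x, fs n x - M0 * q ^+ n <= fs m x + M0 * q ^+ m.
  move=> n m x; have [nm|mn] := leqP n m.
    have := cauchy n (m - n)%N x; rewrite subnKC // ler_norml => /andP[c1 c2].
    have := qn0 m; have := qn0 n; nra.
  have := cauchy m (n - m)%N x; rewrite subnKC ?(ltnW mn) // ler_norml => /andP[c1 c2].
  have := qn0 m; have := qn0 n; nra.
pose g x := inf (range (fun n => fs n x + M0 * q ^+ n)).
have gclose : forall n x, `|g x - fs n x| <= M0 * q ^+ n.
  move=> n x; rewrite ler_norml; apply/andP; split.
    suff : fs n x - M0 * q ^+ n <= g x by lra.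
    apply: lb_le_inf; first by exists (fs 0%N x + M0 * q ^+ 0); exists 0%N.
    by move=> z [m _ <-]; exact: lb.
  suff : g x <= fs n x + M0 * q ^+ n by lra.
  apply: ge_inf; last by exists n.
  by exists (fs 0%N x - M0 * q ^+ 0) => z [m _ <-]; exact: lb.
have small : forall eps : R, 0 < eps -> exists n, M0 * q ^+ n < eps.
  move=> eps eps0.
  have q1 : `|q| < 1 by rewrite ger0_norm // /q ltr_pdivrMr // mul1r ltr_nat.
  have := @cvgr0_norm_lt _ _ _ _ _ _ (cvg_expr q1) (eps / M0).
  case; first by rewrite divr_gt0.
  move=> N _ HN; exists N; have := HN N (leqnn N); rewrite /= ger0_norm //.
  by rewrite ltr_pdivlMr // mulrC.
exists g; split.
  move=> x0; apply/cvgrPdist_lt => eps eps0.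
  have e3 : 0 < eps / 3 by rewrite divr_gt0.
  have [n Hn] := small (eps / 3) e3.
  have := (inv n).1.1 x0; move/cvgrPdist_lt/(_ (eps / 3) e3).
  apply: filterS => x Hx.
  have := gclose n x; have := gclose n x0; rewrite !ler_norml.
  move=> /andP[a1 a2] /andP[b1 b2]; move: Hx; rewrite ltr_norml => /andP[c1 c2].
  rewrite ltr_norml; apply/andP; split; lra.
move=> y x px.
have E : forall eps : R, 0 < eps -> `|err g y x| < eps.
  move=> eps eps0; have e3 : 0 < eps / 3 by rewrite divr_gt0.
  have [n Hn] := small (eps / 3) e3.
  have := (inv n).1.2 y x px; have := gclose n x; have := gclose n (zero y).
  rewrite /err !ler_norml => /andP[a1 a2] /andP[b1 b2] /andP[c1 c2].
  rewrite ltr_norml; apply/andP; split; lra.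
have [e0|ne0] := eqVneq (err g y x) 0.
  by move: e0; rewrite /err => /eqP; rewrite subr_eq0 => /eqP <-.
have n0 : 0 < `|err g y x| by rewrite normr_gt0.
by have := E _ n0; rewrite ltxx.
Qed.

End Main.

Theorem lemma4p5 (R : realType) (X Y : topologicalType)
  (hX : hausdorff_space X) (cX : compact [set: X])
  (hY : hausdorff_space Y) (cY : compact [set: Y])
  (pi : X -> Y) (pi_cont : continuous pi) (pi_surj : forall y, exists x, pi x = y)
  (pi_fc : fully_closed pi)
  (zero : Y -> X) (zero_fibre : forall y, pi (zero y) = y)
  (h : Y -> X -> R) (hH : in_c0_sum pi zero h) :
  exists f : X -> R, continuous f /\ T_eq pi zero f h.
Proof.
exact: (@main_exists R X Y hX cX hY cY pi pi_cont pi_fc zero zero_fibre h hH).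
Qed.
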